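(* Let $(B,\mathfrak{m})$ be a deformation base, $X$ a vector space and $M\subseteq B\widehat{\otimes}X$ a $B$-submodule. Then the following are equivalent: (i) $M$ is quasi-flat and pseudoclosed; (ii) there exist a vector space $Y$ and a $B$-linear isomorphism $\varphi:B\widehat{\otimes}Y\to M$ whose leading term $\pi\circ\varphi|_Y:Y\to X$ is injective.
   Context: Deformation base: complete local Noetherian unital $\mathbb{C}$-algebra $B$ with maximal ideal $\mathfrak{m}$, $B/\mathfrak{m}=\mathbb{C}$. $B\widehat{\otimes}X=\varprojlim(B/\mathfrak{m}^k\otimes X)$; $\pi:B\widehat{\otimes}X\to X$ the canonical projection; $\mathfrak{m}X$ the image of $\mathfrak{m}\widehat{\otimes}X$. For a subspace $Z\subseteq B\widehat{\otimes}X$: $BZ=\{\sum_ib_iz_i:z_i\in Z,b_i\in\mathfrak{m}^{k_i},k_i\to\infty\}$ and $\mathfrak{m}Z$ the same with $k_i\ge1$. $M$ is pseudoclosed if $BM\subseteq M$ and quasi-flat if $M\cap\mathfrak{m}X\subseteq\mathfrak{m}M$. *)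

(* Defs.v *)
From Stdlib Require Import ClassicalEpsilon.
From mathcomp Require Import all_boot all_algebra.
From mathcomp Require Import complex Rstruct.
Import GRing.Theory.

Set Implicit Arguments.
Unset Strict Implicit.
Unset Printing Implicit Defensive.

Local Open Scope ring_scope.

Definition CC : fieldType := complex Rdefinitions.R.

Section DefBase.
Variable B : comAlgType CC.
Variable m : B -> Prop.

Definition is_ideal (I : B -> Prop) : Prop :=
  I 0 /\ (forall x y, I x -> I y -> I (x + y)) /\ (forall a x, I x -> I (a * x)).

Definition fin_generated (I : B -> Prop) : Prop :=
  exists s : seq B, forall x,
    I x <-> exists r : nat -> B, x = \sum_(i < size s) r i * s`_i.

Fixpoint powm (k : nat) : B -> Prop :=
  match k with
  | 0 => fun _ => True
  | k'.+1 => fun x => exists (n : nat) (a b : nat -> B),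
       (forall i, m (a i) /\ powm k' (b i)) /\ x = \sum_(i < n) a i * b i
  end.

(** (B, m) is a deformation base: a complete local Noetherian unital
    C-algebra with maximal ideal m and residue field B/m = C. *)
Definition deformation_base : Prop :=
  [/\ is_ideal m,
      ~ m 1,
      (forall x, ~ m x -> exists y, x * y = 1),
      (forall x, exists c : CC, m (x - c%:A))
    & (forall I, is_ideal I -> fin_generated I)] /\
  ((forall x, (forall k, powm k x) -> x = 0)
    /\ (forall s : nat -> B,
         (forall K, exists N, forall n p, (N <= n)%N -> (N <= p)%N -> powm K (s n - s p)) ->
         exists l, forall K, exists N, forall n, (N <= n)%N -> powm K (s n - l))).

Definition resid (b : B) : CC := epsilon (inhabits 0) (fun c : CC => m (b - c%:A)).

(** A vector space X is given through a basis
    indexed by a type I, i.e. X = C^(I) (finitely supported functions I -> C);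
    then B (^) X = lim_k (B/m^k (x) X) is the space of functions f : I -> B
    which are m-adically null: for every k, f i lies in m^k for all but
    finitely many i. *)
Definition fin_supp (I : Type) (f : I -> CC) : Prop :=
  exists l : list I, forall i, f i <> 0 -> List.In i l.

Definition cnull (I : Type) (f : I -> B) : Prop :=
  forall k, exists l : list I, forall i, ~ powm k (f i) -> List.In i l.

Definition proj (I : Type) (f : I -> B) : I -> CC := fun i => resid (f i).

Definition incl (I : Type) (x : I -> CC) : I -> B := fun i => (x i)%:A.

Definition is_Bsubmodule (I : Type) (M : (I -> B) -> Prop) : Prop :=
  [/\ forall f, M f -> cnull f,
      M (fun _ => 0),
      (forall f g, M f -> M g -> M (fun i => f i + g i))
    & (forall (b : B) f, M f -> M (fun i => b * f i))].

Definition mseries (I : Type) (Z : (I -> B) -> Prop) (k0 : nat) (w : I -> B) : Prop :=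
  exists (z : nat -> I -> B) (b : nat -> B) (k : nat -> nat),
    [/\ forall n, Z (z n),
        forall n, (k0 <= k n)%N /\ powm (k n) (b n),
        (forall K, exists N, forall n, (N <= n)%N -> (K <= k n)%N)
      & (forall K, exists N, forall n, (N <= n)%N ->
           forall i, powm K (w i - \sum_(l < n) b l * z l i))].

Definition BZ (I : Type) (Z : (I -> B) -> Prop) := mseries Z 0.
Definition mZ (I : Type) (Z : (I -> B) -> Prop) := mseries Z 1.

(** mX = m(B(^)X), the image of m(^)X in B(^)X. *)
Definition mX (I : Type) : (I -> B) -> Prop := mZ (@cnull I).

Definition pseudoclosed (I : Type) (M : (I -> B) -> Prop) : Prop :=
  forall w, BZ M w -> M w.

Definition quasi_flat (I : Type) (M : (I -> B) -> Prop) : Prop :=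
  forall w, M w -> mX w -> mZ M w.

Definition Blin_iso (J I : Type) (phi : (J -> B) -> (I -> B)) (M : (I -> B) -> Prop) : Prop :=
  [/\ forall f, cnull f -> M (phi f),
      (forall f g, cnull f -> cnull g -> phi (fun j => f j + g j) = (fun i => phi f i + phi g i)),
      (forall (b : B) f, cnull f -> phi (fun j => b * f j) = (fun i => b * phi f i)),
      (forall f g, cnull f -> cnull g -> phi f = phi g -> f = g)
    & (forall h, M h -> exists f, cnull f /\ phi f = h)].

Definition leading_injective (J I : Type) (phi : (J -> B) -> (I -> B)) : Prop :=
  forall y1 y2 : J -> CC, fin_supp y1 -> fin_supp y2 ->
    proj (phi (incl y1)) = proj (phi (incl y2)) -> y1 = y2.

End DefBase.

(* Main.v *)
Require Import Defs.
From mathcomp Require Import all_boot all_algebra.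
From mathcomp Require Import complex Rstruct.
From mathcomp Require Import ring.
From mathcomp Require Import boolp classical_sets.
From Stdlib Require Import ClassicalEpsilon Classical FunctionalExtensionality.
Import GRing.Theory.

Set Implicit Arguments.
Unset Strict Implicit.
Unset Printing Implicit Defensive.
Local Open Scope ring_scope.

Lemma my_choice (A C : Type) (R : A -> C -> Prop) :
  (forall x, exists y, R x y) -> exists f : A -> C, forall x, R x (f x).
Proof.
move=> H; exists (fun x => proj1_sig (constructive_indefinite_description _ (H x))).
by move=> x; case: (constructive_indefinite_description _ (H x)).
Qed.

Lemma in_smap (A C : Type) (f : A -> C) (l : seq A) y :
  List.In y [seq f x | x <- l] -> exists x, f x = y /\ List.In x l.
Proof.
elim: l => [|a l IH] //= [<-|h]; first by exists a; split => //; left.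
by case: (IH h) => x [? ?]; exists x; split => //; right.
Qed.

Lemma in_smapI (A C : Type) (f : A -> C) (l : seq A) x :
  List.In x l -> List.In (f x) [seq f x | x <- l].
Proof. elim: l => [|a l IH] //= [->|h]; [left|right; apply: IH]; done. Qed.

Lemma nth_In' (A : Type) (x0 : A) (l : seq A) i :
  (i < size l)%N -> List.In (nth x0 l i) l.
Proof.
elim: l i => [|a l IH] [|i] //= h; first by left.
by right; apply: IH.
Qed.

Lemma In_mem (A : eqType) (x : A) (l : seq A) : x \in l -> List.In x l.
Proof. elim: l => [|a l IH] //=; rewrite inE => /orP [/eqP ->|h]; [left|right; apply: IH] => //. Qed.

Lemma sum_nth_ext (R : zmodType) (A : Type) (x0 : A) (l : seq A) (G : A -> R) n :
  G x0 = 0 -> (size l <= n)%N -> \sum_(j < n) G (nth x0 l j) = \sum_(x <- l) G x.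
Proof.
move=> h0 hn; rewrite (big_nth x0) -(big_mkord xpredT (fun j => G (nth x0 l j))).
rewrite (big_cat_nat (leq0n _) hn) /=.
have -> : \sum_(size l <= i < n) G (nth x0 l i) = 0.
  by rewrite big_nat_cond big1 // => j /andP [/andP [hj _] _]; rewrite nth_default.
by rewrite addr0.
Qed.

Lemma In_mem' (A : eqType) (x : A) (l : seq A) : List.In x l -> x \in l.
Proof. elim: l => [|a l IH] //= [->|h]; rewrite inE ?eqxx // IH ?orbT //. Qed.

Section Base.
Variable B : comAlgType CC.
Variable m : B -> Prop.
Hypothesis hdb : deformation_base m.

Local Notation P := (powm m).

Lemma m_ideal : is_ideal m.
Proof. by case: hdb => [[]]. Qed.
Lemma m_not1 : ~ m 1.
Proof. by case: hdb => [[]]. Qed.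
Lemma m_resid x : exists c : CC, m (x - c%:A).
Proof. by case: hdb => [[]]. Qed.
Lemma m_noeth I : is_ideal I -> @fin_generated B I.
Proof. by case: hdb => [[_ _ _ _ h] _]; apply: h. Qed.
Lemma m_sep x : (forall k, P k x) -> x = 0.
Proof. by case: hdb => _ [h _]; apply: h. Qed.
Lemma m_complete (s : nat -> B) :
  (forall K, exists N, forall n p, (N <= n)%N -> (N <= p)%N -> P K (s n - s p)) ->
  exists l, forall K, exists N, forall n, (N <= n)%N -> P K (s n - l).
Proof. by case: hdb => _ [_ h]; apply: h. Qed.

Lemma m0 : m 0. Proof. by case: m_ideal => h _. Qed.
Lemma mD x y : m x -> m y -> m (x + y). Proof. by case: m_ideal => _ [h1 h2]; auto. Qed.
Lemma mM a x : m x -> m (a * x). Proof. by case: m_ideal => _ [h1 h2]; auto. Qed.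

Lemma Pzero k : P k 0.
Proof.
elim: k => [|k IH] //=; exists 0%N, (fun _ => 0), (fun _ => 0).
by rewrite big_ord0; split => // _; split; [exact: m0|].
Qed.

Definition LinP (Q1 Q2 : B -> Prop) (x : B) :=
  exists l : seq (B * B), (forall y, List.In y l -> Q1 y.1 /\ Q2 y.2) /\
     x = \sum_(y <- l) y.1 * y.2.

Lemma PS_LinP k x : P k.+1 x <-> LinP m (P k) x.
Proof.
split.
- move=> [n [a [b [H ->]]]].
  exists [seq (a i, b i) | i <- iota 0 n]; split.
  + move=> y hy; case: (in_smap hy) => i [hi _]; rewrite -hi /=; exact: H.
  + rewrite big_map; have -> : iota 0 n = index_iota 0 n by rewrite /index_iota subn0.
    by rewrite big_mkord.
- move=> [l [H ->]].
  exists (size l), (fun i => (nth (0,0) l i).1), (fun i => (nth (0,0) l i).2).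
  split.
  + move=> i; case: (ltnP i (size l)) => hi.
      by apply: H; apply: nth_In'.
    rewrite nth_default //=; split; first exact: m0.
    exact: Pzero.
  + by rewrite (big_nth (0,0)) big_mkord.
Qed.

Lemma LinP_cat Q1 Q2 x y : LinP Q1 Q2 x -> LinP Q1 Q2 y -> LinP Q1 Q2 (x + y).
Proof.
move=> [l1 [H1 ->]] [l2 [H2 ->]]; exists (l1 ++ l2); split; last by rewrite big_cat.
by move=> z hz; case: (List.in_app_or _ _ _ hz) => ?; [apply: H1|apply: H2].
Qed.

Lemma LinP0 Q1 Q2 : LinP Q1 Q2 0.
Proof. by exists [::]; rewrite big_nil. Qed.

Lemma LinP_mull Q1 Q1' Q2 a x : (forall y, Q1 y -> Q1' (a * y)) -> LinP Q1 Q2 x -> LinP Q1' Q2 (a * x).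
Proof.
move=> Ha [l [H ->]]; exists [seq (a * y.1, y.2) | y <- l]; split.
- move=> z hz; case: (in_smap hz) => y [<- hy] /=; case: (H _ hy) => ? ?; split => //; exact: Ha.
- by rewrite big_map mulr_sumr; apply: eq_bigr => y _; rewrite mulrA.
Qed.


Lemma PD k x y : P k x -> P k y -> P k (x + y).
Proof. case: k => [|k] //= hx hy; apply/PS_LinP; apply: LinP_cat; exact/PS_LinP. Qed.

Lemma PM k a x : P k x -> P k (a * x).
Proof. case: k => [|k] //= hx; apply/PS_LinP; apply: LinP_mull; last exact/PS_LinP.
exact: mM. Qed.

Lemma PMr k a x : P k x -> P k (x * a).
Proof. by move=> h; rewrite mulrC; apply: PM. Qed.

Lemma PN k x : P k x -> P k (- x).
Proof. by move=> h; rewrite -mulN1r; apply: PM. Qed.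

Lemma PB k x y : P k x -> P k y -> P k (x - y).
Proof. by move=> hx hy; apply: PD => //; apply: PN. Qed.

Lemma PZ k (c : CC) x : P k x -> P k (c *: x).
Proof. by move=> h; rewrite -mulr_algl; apply: PM. Qed.

Lemma Psum k (T : Type) (l : seq T) (F : T -> B) :
  (forall x, List.In x l -> P k (F x)) -> P k (\sum_(x <- l) F x).
Proof.
elim: l => [|a l IH] H; first by rewrite big_nil; exact: Pzero.
rewrite big_cons; apply: PD; first by apply: H; left.
by apply: IH => x hx; apply: H; right.
Qed.

Lemma Psum_ord k n (F : 'I_n -> B) :
  (forall i, P k (F i)) -> P k (\sum_(i < n) F i).
Proof. by move=> H; apply: (big_ind (P k)) => //; [exact: Pzero|exact: PD]. Qed.

Lemma LinP_ideal (I : B -> Prop) Q1 Q2 x : I 0 -> (forall a b, I a -> I b -> I (a+b)) ->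
  (forall y1 y2, Q1 y1 -> Q2 y2 -> I (y1*y2)) -> LinP Q1 Q2 x -> I x.
Proof.
move=> h0 hD hM [l [H ->]]; elim: l H => [|a l IH] H; first by rewrite big_nil.
rewrite big_cons; apply: hD; last by apply: IH => y hy; apply: H; right.
by case: (H a (or_introl erefl)) => ? ?; apply: hM.
Qed.

Lemma LinP_mono (Q1 Q2 Q1' Q2' : B -> Prop) x : (forall y, Q1 y -> Q1' y) ->
  (forall y, Q2 y -> Q2' y) -> LinP Q1 Q2 x -> LinP Q1' Q2' x.
Proof.
move=> h1 h2 [l [H ->]]; exists l; split => // y hy; case: (H y hy) => ? ?; split; auto.
Qed.

Lemma P1m x : P 1 x <-> m x.
Proof.
split.
- move=> /PS_LinP; apply: LinP_ideal; [exact: m0|exact: mD|].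
  by move=> y1 y2 h _; rewrite mulrC; apply: mM.
- move=> h; apply/PS_LinP; exists [:: (x, 1)]; split; last by rewrite big_seq1 mulr1.
  by move=> y [<-|[]].
Qed.

Lemma PS_sub k x : P k.+1 x -> P k x.
Proof.
elim: k x => [|k IH] x //.
move=> /PS_LinP h; apply/PS_LinP; apply: LinP_mono h => //; exact: IH.
Qed.

Lemma P_le k l x : (k <= l)%N -> P l x -> P k x.
Proof.
move=> /subnK <-; elim: (l - k)%N => [|d IH] // h.
by apply: IH; apply: PS_sub; rewrite -addSn.
Qed.

Lemma P_mul k l a b : P k a -> P l b -> P (k + l) (a * b).
Proof.
elim: k a => [|k IH] a ha hb; first by rewrite add0n; apply: PM.
rewrite addSn; apply/PS_LinP; move/PS_LinP: ha => [s [H ->]].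
exists [seq (y.1, y.2 * b) | y <- s]; split.
- move=> z hz; case: (in_smap hz) => y [<- hy] /=; case: (H y hy) => ? ?; split => //.
  exact: IH.
- by rewrite big_map mulr_suml; apply: eq_bigr => y _; rewrite mulrA.
Qed.

Lemma P_mS k a x : m a -> P k x -> P k.+1 (a * x).
Proof. by move=> /P1m ha hx; have := P_mul ha hx; rewrite add1n. Qed.

Local Notation res := (@resid B m).

Lemma res_spec x : m (x - (res x)%:A).
Proof. rewrite /resid; apply: (epsilon_spec (inhabits (0:CC)) (fun c : CC => m (x - c%:A))); exact: m_resid. Qed.

Lemma algM (c d : CC) : (c * d)%:A = c%:A * d%:A :> B.
Proof. by rewrite mulr_algl scalerA. Qed.

Lemma mB x y : m x -> m y -> m (x - y).
Proof. by move=> hx hy; apply: mD => //; rewrite -mulN1r; apply: mM. Qed.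

Lemma mZ' (c : CC) x : m x -> m (c *: x).
Proof. by move=> h; rewrite -mulr_algl; apply: mM. Qed.

Lemma m_alg (c : CC) : m c%:A -> c = 0.
Proof.
move=> h; apply/eqP; apply/negP => /negP hc; apply: m_not1.
have -> : (1 : B) = (c^-1 * c)%:A by rewrite mulVf // scale1r.
by rewrite algM; apply: mM.
Qed.

Lemma res_uniq x (c : CC) : m (x - c%:A) -> res x = c.
Proof.
move=> h; apply/eqP; rewrite -subr_eq0; apply/eqP; apply: m_alg.
have -> : (res x - c)%:A = (x - c%:A) - (x - (res x)%:A) :> B.
  by rewrite scalerBl; ring.
by apply: mB => //; exact: res_spec.
Qed.

Lemma res_add x y : res (x + y) = res x + res y.
Proof.
apply: res_uniq; rewrite scalerDl opprD addrACA; apply: mD; exact: res_spec.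
Qed.

Lemma res_scale (c : CC) x : res (c *: x) = c * res x.
Proof.
by apply: res_uniq; rewrite -scalerA -scalerBr; apply: mZ'; exact: res_spec.
Qed.

Lemma res_alg (c : CC) : res c%:A = c.
Proof. by apply: res_uniq; rewrite subrr; exact: m0. Qed.

Lemma res0 : res 0 = 0.
Proof. by have := res_alg 0; rewrite scale0r. Qed.

Lemma res_opp x : res (- x) = - res x.
Proof. by rewrite -scaleN1r res_scale mulN1r. Qed.

Lemma res_sub x y : res (x - y) = res x - res y.
Proof. by rewrite res_add res_opp. Qed.

Lemma res_mul x y : res (x * y) = res x * res y.
Proof.
apply: res_uniq.
have -> : x * y - (res x * res y)%:A =
   (x - (res x)%:A) * y + (res x)%:A * (y - (res y)%:A).
  by rewrite algM mulrBl mulrBr addrA subrK.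
apply: mD; last by apply: mM; exact: res_spec.
rewrite mulrC; apply: mM; exact: res_spec.
Qed.

Lemma res_m x : m x <-> res x = 0.
Proof.
split => [h|h]; first by apply: res_uniq; rewrite scale0r subr0.
by have := res_spec x; rewrite h scale0r subr0.
Qed.

Lemma res_sum (T : Type) (l : seq T) (F : T -> B) :
  res (\sum_(x <- l) F x) = \sum_(x <- l) res (F x).
Proof.
elim: l => [|a l IH]; first by rewrite !big_nil res0.
by rewrite !big_cons res_add IH.
Qed.

Section Cnull.
Variable T : Type.

Lemma cnull0 : @cnull B m T (fun _ => 0).
Proof. by move=> k; exists [::] => i []; exact: Pzero. Qed.

Lemma cnullD (f g : T -> B) : cnull m f -> cnull m g -> cnull m (fun i => f i + g i).
Proof.
move=> hf hg k; case: (hf k) => l1 h1; case: (hg k) => l2 h2; exists (l1 ++ l2) => i hi.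
apply: List.in_or_app; apply: NNPP => /Decidable.not_or [n1 n2]; apply: hi.
apply: PD; apply: NNPP => h; [apply: n1; exact: h1 | apply: n2; exact: h2].
Qed.

Lemma cnullM (b : B) (f : T -> B) : cnull m f -> cnull m (fun i => b * f i).
Proof.
move=> hf k; case: (hf k) => l h; exists l => i hi; apply: h => h'; apply: hi; exact: PM.
Qed.

Lemma cnullN (f : T -> B) : cnull m f -> cnull m (fun i => - f i).
Proof.
move=> h; have := cnullM (-1) h; congr cnull; apply: functional_extensionality => i.
by rewrite mulN1r.
Qed.

Lemma cnullB (f g : T -> B) : cnull m f -> cnull m g -> cnull m (fun i => f i - g i).
Proof. by move=> hf hg; apply: cnullD => //; exact: cnullN. Qed.

Lemma cnull_sum (A : Type) (l : seq A) (F : A -> T -> B) :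
  (forall a, List.In a l -> cnull m (F a)) -> cnull m (fun i => \sum_(a <- l) F a i).
Proof.
elim: l => [|a l IH] H.
  have -> : (fun i : T => \sum_(a <- [::]) F a i) = (fun _ => 0).
    by apply: functional_extensionality => i; rewrite big_nil.
  exact: cnull0.
have -> : (fun i => \sum_(a0 <- a :: l) F a0 i) = (fun i => F a i + \sum_(a0 <- l) F a0 i).
  by apply: functional_extensionality => i; rewrite big_cons.
apply: cnullD; first by apply: H; left.
by apply: IH => b hb; apply: H; right.
Qed.

Lemma cnull_ext (f g : T -> B) : (forall i, f i = g i) -> cnull m f -> cnull m g.
Proof. by move=> h; have -> : f = g by apply: functional_extensionality. Qed.

Lemma cnull_incl (y : T -> CC) : fin_supp y -> cnull m (incl B y).
Proof.
move=> [l hl] k; exists l => i hi; apply: hl => hy; apply: hi; rewrite /incl hy scale0r.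
exact: Pzero.
Qed.

End Cnull.

Definition cv (T : Type) (s : nat -> T -> B) (w : T -> B) :=
  forall K, exists N, forall n, (N <= n)%N -> forall i, P K (w i - s n i).

Definition cauchy (T : Type) (s : nat -> T -> B) :=
  forall K, exists N, forall n p, (N <= n)%N -> (N <= p)%N -> forall i, P K (s n i - s p i).

Lemma allP0 (T : Type) (w : T -> B) : (forall K i, P K (w i)) -> w = fun _ => 0.
Proof. by move=> h; apply: functional_extensionality => i; apply: m_sep => K; apply: h. Qed.

Lemma allP_eq (T : Type) (w w' : T -> B) : (forall K i, P K (w i - w' i)) -> w = w'.
Proof.
move=> h; apply: functional_extensionality => i; apply/eqP; rewrite -subr_eq0; apply/eqP.
by apply: m_sep => K; apply: h.
Qed.

Lemma cv_uniq (T : Type) (s : nat -> T -> B) w w' : cv s w -> cv s w' -> w = w'.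
Proof.
move=> h h'; apply: allP_eq => K i; case: (h K) => N1 H1; case: (h' K) => N2 H2.
have -> : w i - w' i = (w i - s (maxn N1 N2) i) - (w' i - s (maxn N1 N2) i) by ring.
by apply: PB; [apply: H1; exact: leq_maxl|apply: H2; exact: leq_maxr].
Qed.

Lemma cv_exists (T : Type) (s : nat -> T -> B) : cauchy s -> exists w, cv s w.
Proof.
move=> hc.
have : forall i, exists l, forall K, exists N, forall n, (N <= n)%N -> P K (s n i - l).
  move=> i; apply: m_complete => K; case: (hc K) => N HN; exists N => n p hn hp.
  exact: HN.
case/my_choice => w hw; exists w => K; case: (hc K) => N HN; exists N => n hn i.
case: (hw i K) => Ni HNi.
have -> : w i - s n i = (s (maxn N Ni) i - s n i) - (s (maxn N Ni) i - w i) by ring.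
by apply: PB; [apply: HN => //; exact: leq_maxl|apply: HNi; exact: leq_maxr].
Qed.

Lemma cv_cnull (T : Type) (s : nat -> T -> B) w :
  (forall n, cnull m (s n)) -> cv s w -> cnull m w.
Proof.
move=> hs hw K; case: (hw K) => N HN; case: (hs N K) => l hl; exists l => i hi.
apply: hl => h; apply: hi.
have -> : w i = (w i - s N i) + s N i by ring.
by apply: PD => //; apply: HN.
Qed.

Lemma cvD (T : Type) (s t : nat -> T -> B) w v : cv s w -> cv t v ->
  cv (fun n i => s n i + t n i) (fun i => w i + v i).
Proof.
move=> hs ht K; case: (hs K) => N1 H1; case: (ht K) => N2 H2; exists (maxn N1 N2) => n hn i.
have -> : w i + v i - (s n i + t n i) = (w i - s n i) + (v i - t n i) by ring.
rewrite geq_max in hn; case/andP: hn => ? ?; apply: PD; [exact: H1|exact: H2].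
Qed.

Lemma cvM (T : Type) (s : nat -> T -> B) w (b : B) : cv s w ->
  cv (fun n i => b * s n i) (fun i => b * w i).
Proof.
move=> hs K; case: (hs K) => N H; exists N => n hn i.
by rewrite -mulrBr; apply: PM; apply: H.
Qed.

Lemma cv_sum (T A : Type) (l : seq A) (s : A -> nat -> T -> B) (w : A -> T -> B) :
  (forall a, List.In a l -> cv (s a) (w a)) ->
  cv (fun n i => \sum_(a <- l) s a n i) (fun i => \sum_(a <- l) w a i).
Proof.
elim: l => [|a l IH] H.
  by move=> K; exists 0%N => n _ i; rewrite !big_nil subrr; exact: Pzero.
move=> K; have := cvD (H a (or_introl erefl)) (IH (fun b hb => H b (or_intror hb))) K.
case=> N HN; exists N => n hn i; rewrite !big_cons; exact: HN.
Qed.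

Lemma cv_ext (T : Type) (s t : nat -> T -> B) w : (forall n i, s n i = t n i) -> cv s w -> cv t w.
Proof.
move=> h hs K; case: (hs K) => N HN; exists N => n hn i; rewrite -h; exact: HN.
Qed.

Lemma P_split K t x : P (K + t) x -> LinP (P K) (P t) x.
Proof.
elim: K x => [|K IH] x.
  rewrite add0n => h; exists [:: (1, x)]; split; last by rewrite big_seq1 mul1r.
  by move=> y [<-|[]].
rewrite addSn => /PS_LinP h.
apply: (LinP_ideal (I := LinP (P K.+1) (P t))) h.
- exact: LinP0.
- move=> ? ?; exact: LinP_cat.
- move=> y1 y2 h1 h2; apply: LinP_mull; last exact: IH.
  by move=> y hy; apply: P_mS.
Qed.

Lemma P_ideal K : is_ideal (P K).
Proof. split; [exact: Pzero|split; [exact: PD|exact: PM]]. Qed.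

Lemma gens K : exists s : seq B, (forall r, P K (s`_r)) /\
  forall t x, P (K + t) x -> exists c : nat -> B, (forall r, P t (c r)) /\
     x = \sum_(r < size s) s`_r * c r.
Proof.
case: (m_noeth (P_ideal K)) => s hs; exists s; split.
  move=> r; case: (ltnP r (size s)) => hr; last by rewrite nth_default //; exact: Pzero.
  apply/hs; exists (fun i => (i == r)%:R).
  rewrite (bigD1 (Ordinal hr)) //= eqxx mul1r big1 ?addr0 // => j hj.
  have -> : (nat_of_ord j == r) = false.
    by apply/negbTE; apply: contra hj => /eqP h; apply/eqP; apply: val_inj.
  by rewrite mul0r.
move=> t x /P_split [l [Hl ->]].
have : forall y : B * B, exists e : nat -> B, P K y.1 -> y.1 = \sum_(i < size s) e i * s`_i.
  move=> y; case: (classic (P K y.1)) => h; last by exists (fun _ => 0).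
  by case/hs: h => e he; exists e.
case/my_choice => e he.
exists (fun r => \sum_(y <- l) e y r * y.2); split.
  move=> r; apply: Psum => y hy; apply: PM; by case: (Hl y hy).
rewrite (eq_big_seq (fun y => \sum_(i < size s) s`_i * (e y i * y.2))); last first.
  move=> y hy; rewrite he; last by case: (Hl y (In_mem hy)).
  by rewrite mulr_suml; apply: eq_bigr => i _; ring.
by rewrite exchange_big; apply: eq_bigr => i _; rewrite mulr_sumr.
Qed.

Definition Comb (T : Type) (Q : B -> Prop) (Z : (T -> B) -> Prop) (w : T -> B) :=
  exists l : seq (B * (T -> B)), (forall x, List.In x l -> Q x.1 /\ Z x.2) /\
    w = (fun i => \sum_(x <- l) x.1 * x.2 i).

Lemma Comb0 T Q Z : Comb Q Z (fun _ : T => 0).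
Proof. by exists [::]; split => //; apply: functional_extensionality => i; rewrite big_nil. Qed.

Lemma CombD T Q Z (w v : T -> B) : Comb Q Z w -> Comb Q Z v -> Comb Q Z (fun i => w i + v i).
Proof.
move=> [l1 [H1 ->]] [l2 [H2 ->]]; exists (l1 ++ l2); split.
  by move=> z hz; case: (List.in_app_or _ _ _ hz) => ?; [apply: H1|apply: H2].
by apply: functional_extensionality => i; rewrite big_cat.
Qed.

Lemma CombM T Q Q' Z (b : B) (w : T -> B) : (forall y, Q y -> Q' (b * y)) ->
  Comb Q Z w -> Comb Q' Z (fun i => b * w i).
Proof.
move=> hQ [l [H ->]]; exists [seq (b * x.1, x.2) | x <- l]; split.
  move=> z hz; case: (in_smap hz) => x [<- hx] /=; case: (H x hx) => ? ?; split; auto.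
apply: functional_extensionality => i; rewrite big_map mulr_sumr.
by apply: eq_bigr => x _; rewrite mulrA.
Qed.

Lemma Comb_mono T Q Q' Z Z' (w : T -> B) : (forall y, Q y -> Q' y) ->
  (forall z, Z z -> Z' z) -> Comb Q Z w -> Comb Q' Z' w.
Proof.
move=> h1 h2 [l [H ->]]; exists l; split => // x hx; case: (H x hx) => ? ?; split; auto.
Qed.

Lemma Comb_P T K Z (w : T -> B) : Comb (P K) Z w -> forall i, P K (w i).
Proof.
move=> [l [H ->]] i; apply: Psum => x hx; rewrite mulrC; apply: PM; by case: (H x hx).
Qed.

Lemma Comb_cnull T Q (w : T -> B) : Comb Q (@cnull B m T) w -> cnull m w.
Proof.
move=> [l [H ->]]; apply: cnull_sum => x hx; apply: cnullM; by case: (H x hx).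
Qed.

Lemma down_le (Q : nat -> Prop) : (forall t, Q t.+1 -> Q t) -> forall t t', (t' <= t)%N -> Q t -> Q t'.
Proof.
move=> h t t' /subnK <-; elim: (t - t')%N => [|d IH] //; rewrite addSn => /h; exact: IH.
Qed.

Lemma depth (Q : nat -> Prop) : Q 0 -> (forall t, Q t.+1 -> Q t) -> (exists k, ~ Q k) ->
  exists d, Q d /\ forall t, Q t -> (t <= d)%N.
Proof.
move=> h0 hd [k hk].
have : exists d, Q d /\ ~ Q d.+1.
  elim: k hk => [|k IH] hk; first by [].
  case: (classic (Q k)) => h; [by exists k|exact: IH].
case=> d [h1 h2]; exists d; split => // t ht; rewrite leqNgt; apply/negP => hlt.
by apply: h2; apply: (down_le hd hlt).
Qed.

Lemma decomp (T : Type) K (g : T -> B) : cnull m g -> (forall i, P K (g i)) ->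
  Comb (P K) (@cnull B m T) g.
Proof.
move=> hg hK; case: (gens K) => s [hs1 hs2].
have : forall i, exists c : nat -> B, g i = \sum_(r < size s) s`_r * c r /\
    forall L r, P (K + L) (g i) -> P L (c r).
  move=> i; case: (classic (g i = 0)) => hgi.
    exists (fun _ => 0); split; last by move=> *; exact: Pzero.
    by rewrite hgi big1 // => r _; rewrite mulr0.
  have [d [hd1 hd2]] : exists d, P (K + d) (g i) /\ forall t, P (K + t) (g i) -> (t <= d)%N.
    apply: depth; first by rewrite addn0.
      by move=> t; rewrite addnS; apply: PS_sub.
    apply: NNPP => hn; apply: hgi; apply: m_sep => k; apply: (P_le (leq_addl K k)).
    by apply: NNPP => h; apply: hn; exists k.
  case: (hs2 _ _ hd1) => c [hc1 hc2]; exists c; split => // L r hL.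
  by apply: (P_le (hd2 _ hL)).
case/my_choice => c hc.
exists [seq (s`_r, fun i => c i r) | r <- iota 0 (size s)]; split.
  move=> x hx; case: (in_smap hx) => r [<- _] /=; split => // L.
  case: (hg (K + L)%N) => l hl; exists l => i hi; apply: hl => h; apply: hi.
  by case: (hc i) => _; apply.
apply: functional_extensionality => i; rewrite big_map.
have -> : iota 0 (size s) = index_iota 0 (size s) by rewrite /index_iota subn0.
by rewrite big_mkord; case: (hc i).
Qed.

Section LinMap.
Variables (J I : Type) (phi : (J -> B) -> (I -> B)).
Hypothesis hadd : forall f g, cnull m f -> cnull m g ->
  phi (fun j => f j + g j) = (fun i => phi f i + phi g i).
Hypothesis hmul : forall (b : B) f, cnull m f -> phi (fun j => b * f j) = (fun i => b * phi f i).

Lemma phi0 : phi (fun _ => 0) = (fun _ => 0).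
Proof.
have := hmul 0 (@cnull0 J); have -> : (fun _ : J => (0 : B) * 0) = (fun _ => 0).
  by apply: functional_extensionality => j; rewrite mul0r.
move=> ->; apply: functional_extensionality => i; by rewrite mul0r.
Qed.

Lemma phiN f : cnull m f -> phi (fun j => - f j) = (fun i => - phi f i).
Proof.
move=> hf; have := hmul (-1) hf.
have -> : (fun j => (-1 : B) * f j) = (fun j => - f j).
  by apply: functional_extensionality => j; rewrite mulN1r.
move=> ->; apply: functional_extensionality => i; by rewrite mulN1r.
Qed.

Lemma phiB f g : cnull m f -> cnull m g -> phi (fun j => f j - g j) = (fun i => phi f i - phi g i).
Proof. by move=> hf hg; rewrite hadd ?phiN //; exact: cnullN. Qed.

Lemma phi_comb (l : seq (B * (J -> B))) : (forall x, List.In x l -> cnull m x.2) ->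
  phi (fun j => \sum_(x <- l) x.1 * x.2 j) = (fun i => \sum_(x <- l) x.1 * phi x.2 i).
Proof.
elim: l => [|a l IH] H.
  have -> : (fun j : J => \sum_(x <- ([::] : seq (B * (J -> B)))) x.1 * x.2 j) = (fun _ => 0).
    by apply: functional_extensionality => j; rewrite big_nil.
  by rewrite phi0; apply: functional_extensionality => i; rewrite big_nil.
have -> : (fun j => \sum_(x <- a :: l) x.1 * x.2 j) =
   (fun j => a.1 * a.2 j + \sum_(x <- l) x.1 * x.2 j).
  by apply: functional_extensionality => j; rewrite big_cons.
have ha : cnull m a.2 by apply: H; left.
have hl : forall x, List.In x l -> cnull m x.2 by move=> x hx; apply: H; right.
rewrite hadd; first last.
- by apply: cnull_sum => x hx; apply: cnullM; apply: hl.
- exact: cnullM.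
rewrite IH // hmul //; apply: functional_extensionality => i; by rewrite big_cons.
Qed.

Lemma phi_cont K f : cnull m f -> (forall j, P K (f j)) -> forall i, P K (phi f i).
Proof.
move=> hf hK; case: (decomp hf hK) => l [H ->]; rewrite phi_comb; last first.
  by move=> x hx; case: (H x hx).
move=> i; apply: Psum => x hx; apply: PMr; by case: (H x hx).
Qed.

End LinMap.

Lemma phi_sumn (J I : Type) (phi : (J -> B) -> (I -> B)) :
  (forall f g, cnull m f -> cnull m g ->
     phi (fun j => f j + g j) = (fun i => phi f i + phi g i)) ->
  (forall (b : B) f, cnull m f -> phi (fun j => b * f j) = (fun i => b * phi f i)) ->
  forall (b : nat -> B) (f : nat -> J -> B) n, (forall l, cnull m (f l)) ->
  phi (fun j => \sum_(l < n) b l * f l j) = (fun i => \sum_(l < n) b l * phi (f l) i).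
Proof.
move=> hadd hmul b f n hf; elim: n => [|n IH].
  have -> : (fun j : J => \sum_(l < 0) b l * f l j) = (fun _ => 0).
    by apply: functional_extensionality => j; rewrite big_ord0.
  by rewrite (phi0 hmul); apply: functional_extensionality => i; rewrite big_ord0.
have -> : (fun j => \sum_(l < n.+1) b l * f l j) = (fun j => \sum_(l < n) b l * f l j + b n * f n j).
  by apply: functional_extensionality => j; rewrite big_ord_recr.
rewrite hadd; first last.
- exact: cnullM.
- by apply: cnull_sum => l _; apply: cnullM.
rewrite IH hmul //; apply: functional_extensionality => i; by rewrite big_ord_recr.
Qed.

Lemma sumn_cnull (T : Type) (b : nat -> B) (f : nat -> T -> B) n : (forall l, cnull m (f l)) ->
  cnull m (fun j => \sum_(l < n) b l * f l j).
Proof. by move=> hf; apply: cnull_sum => l _; apply: cnullM. Qed.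

Lemma tail_P (T : Type) (a : nat -> T -> B) K N : (forall l, (N <= l)%N -> forall i, P K (a l i)) ->
  forall n i, (N <= n)%N -> P K (\sum_(l < n) a l i - \sum_(l < N) a l i).
Proof.
move=> h n i hn; rewrite -!(big_mkord xpredT (fun l => a l i)) (big_cat_nat (leq0n N) hn) /=.
rewrite addrAC subrr add0r big_nat_cond; apply: (big_ind (P K)); [exact: Pzero|exact: PD|].
by move=> l /andP [/andP [hl _] _]; apply: h.
Qed.

Lemma cauchy_series (T : Type) (a : nat -> T -> B) :
  (forall K, exists N, forall l, (N <= l)%N -> forall i, P K (a l i)) ->
  cauchy (fun n i => \sum_(l < n) a l i).
Proof.
move=> h K; case: (h K) => N HN; exists N => n p hn hp i.
have -> : \sum_(l < n) a l i - \sum_(l < p) a l i =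
  (\sum_(l < n) a l i - \sum_(l < N) a l i) - (\sum_(l < p) a l i - \sum_(l < N) a l i) by ring.
by apply: PB; apply: tail_P.
Qed.

Lemma mseries_P (T : Type) Z k0 (w : T -> B) : mseries m Z k0 w -> forall i, P k0 (w i).
Proof.
move=> [z [b [k [hz hk hkinf hcv]]]] i; case: (hcv k0) => N HN.
have -> : w i = (w i - \sum_(l < N) b l * z l i) + \sum_(l < N) b l * z l i by ring.
apply: PD; first exact: HN.
apply: Psum_ord => l; apply: PMr; case: (hk l) => h1 h2; exact: (P_le h1).
Qed.

Lemma comb_mseries (T : Type) Z k0 (w : T -> B) : Z (fun _ => 0) -> Comb (P k0) Z w ->
  mseries m Z k0 w.
Proof.
move=> hZ0 [l [H ->]].
pose x0 : B * (T -> B) := (0, fun _ => 0).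
have Hn : forall n, P k0 (nth x0 l n).1 /\ Z (nth x0 l n).2.
  move=> n; case: (ltnP n (size l)) => hn; first by apply: H; apply: nth_In'.
  by rewrite nth_default //=; split => //; exact: Pzero.
exists (fun n => (nth x0 l n).2), (fun n => (nth x0 l n).1),
  (fun n => if (n < size l)%N then k0 else (k0 + n)%N); split.
- by move=> n; case: (Hn n).
- move=> n; case: ifP => hn; first by split => //; case: (Hn n).
  rewrite nth_default; last by rewrite leqNgt hn.
  split; [exact: leq_addr|exact: Pzero].
- move=> K; exists (size l + K)%N => n hn; case: ifP => h.
    by move: (leq_trans (leq_addr K _) hn); rewrite leqNgt h.
  apply: leq_trans (leq_addl _ _); apply: leq_trans hn; exact: leq_addl.
- move=> K; exists (size l) => n hn i.
  rewrite (@sum_nth_ext _ _ x0 l (fun x : B * (T -> B) => x.1 * x.2 i) n) //=; last by rewrite mul0r.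
  rewrite subrr; exact: Pzero.
Qed.

Section IIimpI.
Variables (J I : Type) (M : (I -> B) -> Prop) (phi : (J -> B) -> (I -> B)).
Hypothesis hMsub : is_Bsubmodule m M.
Hypothesis hiso : Blin_iso m phi M.
Hypothesis hlead : leading_injective m phi.

Lemma ii_pseudoclosed : pseudoclosed m M.
Proof.
case: hiso => hM hadd hmul hinj hsurj.
move=> w [z [b [k [hz hk hkinf hcv]]]].
have : forall n, exists f, cnull m f /\ phi f = z n by move=> n; apply: hsurj.
case/my_choice => f hf.
have hfc : forall n, cnull m (f n) by move=> n; case: (hf n).
have hca : cauchy (fun n j => \sum_(l < n) b l * f l j).
  apply: (@cauchy_series _ (fun l j => b l * f l j)) => K; case: (hkinf K) => N HN; exists N => l hl j.
  apply: PMr; case: (hk l) => _ h; exact: (P_le (HN l hl) h).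
case: (cv_exists hca) => F hF.
have hFc : cnull m F by apply: (cv_cnull _ hF) => n; apply: sumn_cnull.
suff <- : phi F = w by apply: hM.
apply: allP_eq => K i; case: (hF K) => N1 H1; case: (hcv K) => N2 H2.
pose n := maxn N1 N2.
have e : phi (fun j => \sum_(l < n) b l * f l j) = (fun i => \sum_(l < n) b l * z l i).
  rewrite (phi_sumn hadd hmul) //; apply: functional_extensionality => i'.
  by apply: eq_bigr => l _; case: (hf l) => _ ->.
have -> : phi F i - w i = (phi F i - phi (fun j => \sum_(l < n) b l * f l j) i)
    - (w i - \sum_(l < n) b l * z l i) by rewrite e; ring.
apply: PB; last by apply: H2; exact: leq_maxr.
have hSc : cnull m (fun j => \sum_(l < n) b l * f l j) by apply: sumn_cnull.
have eB := phiB hadd hmul hFc hSc.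
have -> : phi F i - phi (fun j => \sum_(l < n) b l * f l j) i =
   phi (fun j => F j - \sum_(l < n) b l * f l j) i by rewrite eB.
apply: phi_cont => //.
  by apply: cnullB.
by move=> j; apply: H1; exact: leq_maxl.
Qed.

Lemma ii_quasi_flat : quasi_flat m M.
Proof.
case: hiso => hM hadd hmul hinj hsurj.
case: hMsub => hMc hM0 hMD hMM.
move=> w hw hmX.
have hwm : forall i, P 1 (w i) by apply: mseries_P hmX.
case: (hsurj w hw) => f [hfc hfw].
pose y := fun j => res (f j).
have hy : fin_supp y.
  case: (hfc 1%N) => l hl; exists l => j hj; apply: hl => h; apply: hj.
  by rewrite /y; apply/res_m/P1m.
pose f1 := fun j => f j - incl B y j.
have hf1c : cnull m f1 by apply: cnullB => //; exact: cnull_incl.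
have hf1m : forall j, P 1 (f1 j) by move=> j; apply/P1m; exact: res_spec.
have ef : f = fun j => incl B y j + f1 j.
  by apply: functional_extensionality => j; rewrite /f1; ring.
have hy0 : y = fun _ => 0.
  apply: hlead => //; first by exists [::].
  have -> : incl B (fun _ : J => (0 : CC)) = fun _ => 0.
    by apply: functional_extensionality => j; rewrite /incl scale0r.
  rewrite (phi0 hmul); apply: functional_extensionality => i; rewrite /proj res0.
  have -> : phi (incl B y) i = phi f i - phi f1 i.
    by rewrite {1}ef hadd //; [ring|exact: cnull_incl].
  rewrite res_sub hfw; have /P1m/res_m -> := hwm i.
  have /P1m/res_m -> := phi_cont hadd hmul hf1c hf1m i; by rewrite subrr.
have hfm : forall j, P 1 (f j).
  move=> j; apply/P1m/res_m; by have := congr1 (fun g => g j) hy0.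
case: (decomp hfc hfm) => l [Hl el].
apply: comb_mseries => //; rewrite -hfw el (phi_comb hadd hmul); last first.
  by move=> x hx; case: (Hl x hx).
exists [seq (x.1, phi x.2) | x <- l]; split.
  move=> x hx; case: (in_smap hx) => x' [<- hx'] /=; case: (Hl x' hx') => ? ?; split => //.
  exact: hM.
by apply: functional_extensionality => i; rewrite big_map.
Qed.

End IIimpI.

Lemma elim_lemma (X : eqType) (I : Type) (Q : B -> Prop)
  (hQ0 : Q 0) (hQD : forall a b, Q a -> Q b -> Q (a + b))
  (hQZ : forall (c : CC) a, Q a -> Q (c%:A * a)) :
  forall (L : seq X) (v : X -> I -> CC), uniq L ->
  (forall c : X -> CC, (forall i, \sum_(x <- L) c x * v x i = 0) -> forall x, x \in L -> c x = 0) ->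
  forall beta : X -> B, (forall i, Q (\sum_(x <- L) beta x * (v x i)%:A)) ->
  forall x, x \in L -> Q (beta x).
Proof.
have hQN : forall a, Q a -> Q (- a).
  by move=> a ha; have := hQZ (-1) a ha; rewrite scaleN1r mulN1r.
have hQsum : forall (L : seq X) (F : X -> B), (forall x, x \in L -> Q (F x)) -> Q (\sum_(x <- L) F x).
  move=> L F h; rewrite big_seq; apply: (big_ind Q) => //.
elim=> [|x0 L IH] v huniq hind beta hb x hx; first by [].
case/andP: huniq => hx0 hu.
have [i0 hi0] : exists i0, v x0 i0 != 0.
  apply: NNPP => hn.
  have hc1 : forall i, \sum_(x <- x0 :: L) (if x == x0 then 1 else 0) * v x i = 0.
    move=> i; rewrite big_cons eqxx mul1r big_seq big1.
      by rewrite addr0; apply/eqP; apply: NNPP => h; apply: hn; exists i; apply/negP.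
    by move=> y hy; case: eqP => [e|_]; [by move: hx0; rewrite -e hy|rewrite mul0r].
  have := hind _ hc1 x0 (mem_head _ _); rewrite eqxx => h10.
  by move: (@oner_neq0 CC); rewrite h10 eqxx.
pose r i := v x0 i / v x0 i0.
pose w y i := v y i - r i * v y i0.
have hw : forall y, x0 != y -> True by [].
have IH' := IH w hu.
have hindw : forall c : X -> CC, (forall i, \sum_(x <- L) c x * w x i = 0) ->
    forall x, x \in L -> c x = 0.
  move=> c hc.
  pose c' y := if y == x0 then - (\sum_(z <- L) c z * v z i0) / v x0 i0 else c y.
  have hc' : forall y, y \in L -> c' y = c y.
    by move=> y hy; rewrite /c'; case: eqP => // e; move: hx0; rewrite -e hy.
  have := hind c'; move=> H y hy; rewrite -hc' //; apply: H; last by rewrite inE hy orbT.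
  move=> i; rewrite big_cons.
  have -> : c' x0 = - (\sum_(z <- L) c z * v z i0) / v x0 i0 by rewrite /c' eqxx.
  rewrite [Y in _ + Y](eq_big_seq (fun z => c z * v z i)); last by move=> z hz; rewrite hc'.
  have := hc i; rewrite /w.
  rewrite (eq_bigr (fun z => c z * v z i - r i * (c z * v z i0))); last by move=> z _; ring.
  rewrite big_split /= sumrN -mulr_sumr => e.
  have -> : \sum_(j <- L) c j * v j i = r i * \sum_(j <- L) c j * v j i0.
    by apply/eqP; rewrite -subr_eq0; apply/eqP.
  by rewrite /r; field.
have hbw : forall i, Q (\sum_(x <- L) beta x * (w x i)%:A).
  move=> i.
  have -> : \sum_(x <- L) beta x * (w x i)%:A =
      \sum_(x <- x0 :: L) beta x * (v x i)%:A - (r i)%:A * \sum_(x <- x0 :: L) beta x * (v x i0)%:A.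
    rewrite !big_cons mulrDr.
    have -> : (r i)%:A * (beta x0 * (v x0 i0)%:A) = beta x0 * (v x0 i)%:A.
      by rewrite mulrCA -algM /r mulfVK.
    rewrite opprD addrACA subrr add0r /w mulr_sumr -sumrB; apply: eq_bigr => y _.
    by rewrite scalerBl algM; ring.
  apply: (hQD); first exact: (hb).
  by apply: (hQN); apply: (hQZ); apply: (hb).
have hL : forall y, y \in L -> Q (beta y) by move=> y hy; apply: (IH w hu hindw beta hbw).
move: hx; rewrite inE => /orP [/eqP ->|]; last exact: (hL).
have e1 : beta x0 = (v x0 i0)^-1%:A * (beta x0 * (v x0 i0)%:A).
  by rewrite mulrCA -algM mulVf // scale1r mulr1.
rewrite e1; apply: (hQZ).
have -> : beta x0 * (v x0 i0)%:A =
   \sum_(x <- x0 :: L) beta x * (v x i0)%:A - \sum_(x <- L) beta x * (v x i0)%:A.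
  by rewrite big_cons addrK.
apply: (hQD); first exact: (hb).
apply: (hQN); apply: (hQsum) => y hy.
by rewrite mulrC; apply: (hQZ); apply: (hL).
Qed.

Lemma sum_iota (R : zmodType) (F : nat -> R) n :
  \sum_(r <- iota 0 n) F r = \sum_(r < n) F r.
Proof. have -> : iota 0 n = index_iota 0 n by rewrite /index_iota subn0.
by rewrite big_mkord. Qed.

Definition indepS (I : Type) (S : (I -> B) -> Prop) :=
  forall (L : seq (I -> B)) (c : (I -> B) -> CC), uniq L -> (forall x, x \in L -> S x) ->
    (forall i, \sum_(x <- L) c x * res (x i) = 0) -> forall x, x \in L -> c x = 0.

Definition spanS (I : Type) (S M : (I -> B) -> Prop) :=
  forall w, M w -> exists (L : seq (I -> B)) (c : (I -> B) -> CC), [/\ uniq L,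
     (forall x, x \in L -> S x) & forall i, res (w i) = \sum_(x <- L) c x * res (x i)].

Lemma In_cat (A : Type) (y : A) (s1 s2 : seq A) : List.In y (s1 ++ s2) <-> List.In y s1 \/ List.In y s2.
Proof. exact: List.in_app_iff. Qed.

Lemma In_flatten_map (A C : Type) (f : A -> seq C) (l : seq A) y :
  List.In y (flatten [seq f a | a <- l]) -> exists a, List.In a l /\ List.In y (f a).
Proof.
elim: l => [|a l IH] //= /In_cat [h|h]; first by exists a; split => //; left.
by case: (IH h) => a' [? ?]; exists a'; split => //; right.
Qed.

Lemma In_iota a d n : List.In n (iota a d) -> (a <= n)%N.
Proof.
elim: d a => [|d IH] a //= [->|h] //; apply: ltnW; exact: IH.
Qed.

Lemma In_take (A : Type) (y : A) n (s : seq A) : List.In y (take n s) -> List.In y s.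
Proof.
elim: s n => [|a s IH] [|n] //= [->|h]; [by left|by right; apply: (IH n)].
Qed.

Lemma sum_take (R : zmodType) (A : Type) (x0 : A) (s : seq A) (G : A -> R) N :
  (N <= size s)%N -> \sum_(k < N) G (nth x0 s k) = \sum_(y <- take N s) G y.
Proof.
move=> hN; rewrite (big_nth x0) size_take_min (minn_idPl hN) big_mkord.
by apply: eq_bigr => k _; rewrite nth_take.
Qed.

Lemma flatten_series (T : Type) (Z : (T -> B) -> Prop) (bl : nat -> seq (B * (T -> B)))
  (lev : nat -> nat) w :
  Z (fun _ => 0) -> (forall n x, List.In x (bl n) -> P (lev n) x.1 /\ Z x.2) ->
  (forall K, exists N, forall n, (N <= n)%N -> (K <= lev n)%N) ->
  cv (fun N i => \sum_(n < N) \sum_(x <- bl n) x.1 * x.2 i) w -> mseries m Z 0 w.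
Proof.
move=> hZ0 hbl hlev hcv.
pose x0 : (B * (T -> B)) * nat := ((0, fun _ => 0), 0%N).
pose bl' n := ((0, fun _ => 0), lev n) :: [seq (x, lev n) | x <- bl n].
pose W n := flatten [seq bl' k | k <- iota 0 n].
have F1 : forall n d, W (n + d)%N = W n ++ flatten [seq bl' k | k <- iota n d].
  by move=> n d; rewrite /W iotaD map_cat flatten_cat.
have F2 : forall n, (n <= size (W n))%N.
  elim=> [|n IH] //; rewrite -addn1 F1 size_cat /= cats0 size_map.
  exact: leq_add IH _.
have F3 : forall n n' k, (n <= n')%N -> (k < size (W n))%N -> nth x0 (W n') k = nth x0 (W n) k.
  by move=> n n' k /subnK <-; rewrite addnC F1 => hk; rewrite nth_cat hk.
have F4 : forall k n, (k < n)%N -> nth x0 (W k.+1) k = nth x0 (W n) k.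
  move=> k n hk; symmetry; apply: F3 => //; exact: (leq_trans (ltnSn k) (F2 k.+1)).
have F5 : forall n y, List.In y (W n) -> P y.2 y.1.1 /\ Z y.1.2.
  move=> n y hy; case: (In_flatten_map hy) => a [_ ha]; case: ha => [<-|h].
    by split => //; exact: Pzero.
  by case: (in_smap h) => x [<- hx] /=; apply: hbl.
have F5' : forall k, List.In (nth x0 (W k.+1) k) (W k.+1).
  by move=> k; apply: nth_In'; apply: F2.
pose e k := nth x0 (W k.+1) k.
exists (fun k => (e k).1.2), (fun k => (e k).1.1), (fun k => (e k).2); split.
- by move=> k; case: (F5 _ _ (F5' k)).
- by move=> k; split => //; case: (F5 _ _ (F5' k)).
- move=> K; case: (hlev K) => N0 HN0; exists (size (W N0)) => k hk.
  have hN0k : (N0 <= k.+1)%N by apply: leq_trans (F2 N0) _; exact: ltnW.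
  set R := flatten [seq bl' j | j <- iota N0 (k.+1 - N0)].
  have eW : W k.+1 = W N0 ++ R.
    by rewrite /R -F1 addnC subnK.
  have hsz := F2 k.+1; rewrite eW size_cat in hsz.
  rewrite /e eW nth_cat ltnNge hk /=.
  have : List.In (nth x0 R (k - size (W N0))) R.
    apply: nth_In'; by rewrite -(ltn_add2l (size (W N0))) subnKC.
  move=> hy; case: (In_flatten_map hy) => n [hn' ha]; have hn := In_iota hn'.
  case: ha => [<-|h]; first exact: HN0.
  by case: (in_smap h) => x [<- _] /=; apply: HN0.
- move=> K; case: (hlev K) => N0 HN0; case: (hcv K) => N1 HN1.
  pose q := maxn N0 N1; exists (size (W q)) => N hN i.
  have hqN : (q <= N)%N by apply: leq_trans (F2 q) hN.
  pose G (y : (B * (T -> B)) * nat) := y.1.1 * y.1.2 i.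
  have -> : \sum_(k < N) (e k).1.1 * (e k).1.2 i = \sum_(y <- take N (W N)) G y.
    rewrite -(@sum_take _ _ x0 (W N) G N); last exact: F2.
    by apply: eq_bigr => k _; rewrite /e /G (F4 k N).
  set R2 := flatten [seq bl' j | j <- iota q (N - q)].
  have eW : W N = W q ++ R2 by rewrite /R2 -F1 addnC subnK.
  rewrite eW take_cat ltnNge hN /= big_cat /=.
  have -> : \sum_(y <- W q) G y = \sum_(n < q) \sum_(x <- bl n) x.1 * x.2 i.
    rewrite /W big_flatten big_map sum_iota; apply: eq_bigr => n _.
    by rewrite big_cons big_map /G /= mul0r add0r.
  have hext : P K (\sum_(y <- take (N - size (W q)) R2) G y).
    apply: Psum => y hy; case: (In_flatten_map (In_take hy)) => n [hn' ha].
    have hn := In_iota hn'; case: ha => [<-|h].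
      by rewrite /G /= mul0r; exact: Pzero.
    case: (in_smap h) => x [<- hx]; rewrite /G /=; apply: PMr.
    case: (hbl n x hx) => h1 _; apply: (P_le _ h1); apply: HN0.
    by apply: leq_trans hn; exact: leq_maxl.
  rewrite opprD addrA; apply: PB => //; apply: HN1; exact: leq_maxr.
Qed.

Lemma chain_fin (T : Type) (F : (T -> Prop) -> Prop) :
  (forall X Y, F X -> F Y -> (forall t, X t -> Y t) \/ (forall t, Y t -> X t)) ->
  forall (L : seq T), (forall x, List.In x L -> exists2 X, F X & X x) ->
  L = [::] \/ exists X, F X /\ forall x, List.In x L -> X x.
Proof.
move=> htot; elim=> [|a L IH] H; first by left.
right; case: (H a (or_introl erefl)) => Xa hFa hXa.
case: (IH (fun x hx => H x (or_intror hx))) => [->|[X [hFX hX]]].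
  exists Xa; split => // x hx; case: hx => [<-|[]]; exact: hXa.
case: (htot _ _ hFa hFX) => hs.
  exists X; split => // x hx; case: hx => [<-|hx]; [exact: hs|exact: hX].
exists Xa; split => // x hx; case: hx => [<-|hx]; [exact: hXa|apply: hs; exact: hX].
Qed.

Lemma basis_exists (I : Type) (M : (I -> B) -> Prop) : M (fun _ => 0) ->
  exists S, [/\ (forall x, S x -> M x), indepS S & spanS S M].
Proof.
move=> hM0.
pose Pr := fun S : (I -> B) -> Prop => (forall x, S x -> M x) /\ indepS S.
have hch : forall F : set (set (I -> B)), subset F Pr -> total_on F subset ->
    Pr (bigcup F (fun X => X)).
  move=> F hFP htot; split.
    by move=> x [X hX hx]; case: (hFP X hX) => h _; apply: h.
  move=> L c hu hL hc.
  have hL' : forall x, List.In x L -> exists2 X, F X & X x.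
    by move=> x hx; case: (hL x (In_mem' hx)) => X ? ?; exists X.
  have htot' : forall X Y, F X -> F Y -> (forall t, X t -> Y t) \/ (forall t, Y t -> X t).
    by move=> X Y hX hY; case: (htot X Y hX hY) => h; [left|right].
  case: (chain_fin htot' hL') => [-> //|[X [hFX hX]]].
  case: (hFP X hFX) => _ hind; apply: hind => // x hx; apply: hX; exact: In_mem hx.
case: (Zorn_bigcup hch) => A [[hAM hAind] hmax].
  exists A; split => // w hw; apply: NNPP => hn.
  have hwA : ~ A w.
    move=> hA; apply: hn; exists [:: w], (fun _ => 1); split => //.
      by move=> x; rewrite inE => /eqP ->.
    by move=> i; rewrite big_seq1 mul1r.
  apply: (hmax (fun x => A x \/ x = w)).
    split; first by move=> x hx; left.
    by move=> h; apply: hwA; exact: (h w (or_intror erefl)).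
  split; first by move=> x [hx|->]; [apply: hAM|].
  move=> L c hu hL hc.
  case: (boolP (w \in L)) => hwL; last first.
    apply: hAind => // x hx; case: (hL x hx) => // e; by move: hwL; rewrite -e hx.
  have hcw : c w = 0.
    apply: NNPP => hcw; apply: hn.
    exists (rem w L), (fun x => - c x / c w); split.
    - exact: rem_uniq.
    - move=> x; rewrite (mem_rem_uniq _ hu) inE => /andP [hxw hx].
      by case: (hL x hx) => // e; move: hxw; rewrite e eqxx.
    - move=> i; have := hc i; rewrite (big_rem w hwL) /= => e.
      have -> : \sum_(y <- rem w L) - c y / c w * res (y i) =
          - (c w)^-1 * \sum_(y <- rem w L) c y * res (y i).
        by rewrite mulr_sumr; apply: eq_bigr => y _; ring.
      have -> : \sum_(y <- rem w L) c y * res (y i) = - (c w * res (w i)).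
        by apply/eqP; rewrite -addr_eq0 addrC; apply/eqP.
      by field; apply/eqP.
  have hrem : forall x, x \in rem w L -> c x = 0.
    apply: hAind.
    - exact: rem_uniq.
    - move=> x; rewrite (mem_rem_uniq _ hu) inE => /andP [hxw hx].
      by case: (hL x hx) => // e; move: hxw; rewrite e eqxx.
    - by move=> i; have := hc i; rewrite (big_rem w hwL) /= hcw mul0r add0r.
  move=> x hx; case: (eqVneq x w) => [->//|hxw]; apply: hrem.
  by rewrite (mem_rem_uniq _ hu) inE hxw hx.
Qed.

Section IimpII.
Variables (I : Type) (M : (I -> B) -> Prop) (S : (I -> B) -> Prop).
Hypothesis hMsub : is_Bsubmodule m M.
Hypothesis hqf : quasi_flat m M.
Hypothesis hpc : pseudoclosed m M.
Hypothesis hSM : forall x, S x -> M x.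
Hypothesis hSind : indepS S.
Hypothesis hSspan : spanS S M.

Lemma M_cnull w : M w -> cnull m w. Proof. by case: hMsub => h _ _ _; apply: h. Qed.
Lemma M0 : M (fun _ => 0). Proof. by case: hMsub. Qed.
Lemma MD w v : M w -> M v -> M (fun i => w i + v i). Proof. by case: hMsub => _ _ h _; apply: h. Qed.
Lemma MM b w : M w -> M (fun i => b * w i). Proof. by case: hMsub => _ _ _ h; apply: h. Qed.
Lemma MB w v : M w -> M v -> M (fun i => w i - v i).
Proof.
move=> hw hv; apply: MD => //; have := MM (-1) hv; congr M.
by apply: functional_extensionality => i; rewrite mulN1r.
Qed.

Lemma K1 w : mZ m M w -> Comb (P 1) M w.
Proof.
case=> z [b [k [hz hk hkinf hcv]]].
case: (gens 1) => s [hs1 hs2].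
have : forall n, exists c : nat -> B, (forall r, P (k n).-1 (c r)) /\
    b n = \sum_(r < size s) s`_r * c r.
  move=> n; case: (hk n) => h1 h2; apply: hs2; rewrite add1n prednK //.
case/my_choice => c hc.
have hlev : forall K, exists N, forall n, (N <= n)%N -> (K <= (k n).-1)%N.
  move=> K; case: (hkinf K.+1) => N HN; exists N => n hn.
  by move: (HN n hn); case: (k n).
have hcau : forall r, cauchy (fun N i => \sum_(l < N) c l r * z l i).
  move=> r; apply: (@cauchy_series _ (fun l i => c l r * z l i)) => K.
  case: (hlev K) => N HN; exists N => l hl i; apply: PMr.
  case: (hc l) => h _; exact: (P_le (HN l hl) (h r)).
have : forall r, exists wr, cv (fun N i => \sum_(l < N) c l r * z l i) wr.
  by move=> r; apply: cv_exists.
case/my_choice => W hW.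
have hWM : forall r, M (W r).
  move=> r; apply: hpc; exists z, (fun l => c l r), (fun l => (k l).-1); split => //.
  - by move=> n; split => //; case: (hc n).
  - exact: (hW r).
have h1 := @cv_sum I 'I_(size s) (index_enum _)
   (fun r n i => s`_r * \sum_(l < n) c l r * z l i) (fun r i => s`_r * W r i)
   (fun r _ => cvM _ (hW r)).
have ew : w = fun i => \sum_(r < size s) s`_r * W r i.
  apply: (cv_uniq hcv); apply: cv_ext h1 => n i.
  symmetry.
  rewrite (eq_bigr (fun l : 'I_n => \sum_(r < size s) s`_r * (c l r * z l i))); last first.
    move=> l _; case: (hc l) => _ ->; rewrite mulr_suml; apply: eq_bigr => r _; ring.
  rewrite exchange_big; apply: eq_bigr => r _; by rewrite mulr_sumr.
exists [seq (s`_r, W r) | r <- iota 0 (size s)]; split.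
  by move=> x hx; case: (in_smap hx) => r [<- _] /=; split; [exact: hs1|exact: hWM].
by rewrite ew; apply: functional_extensionality => i; rewrite big_map sum_iota.
Qed.

Lemma red1 w : M w -> (forall i, res (w i) = 0) -> Comb (P 1) M w.
Proof.
move=> hw h0; apply: K1; apply: hqf => //.
apply: comb_mseries; first exact: cnull0.
apply: decomp; first exact: M_cnull.
by move=> i; apply/P1m/res_m.
Qed.

Definition J := {x : I -> B | S x}.

Definition ext (A : Type) (a0 : A) (f : J -> A) (x : I -> B) : A :=
  match pselect (S x) with left h => f (exist _ x h) | right _ => a0 end.

Lemma ext_val A a0 (f : J -> A) (j : J) : ext a0 f (sval j) = f j.
Proof.
case: j => x h /=; rewrite /ext; case: pselect => [h'|n]; last by [].
by rewrite (Prop_irrelevance h' h).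
Qed.

Lemma ext_nS A a0 (f : J -> A) x : ~ S x -> ext a0 f x = a0.
Proof. by move=> n; rewrite /ext; case: pselect. Qed.

Lemma ext_S A a0 (f : J -> A) x (h : S x) : ext a0 f x = f (exist _ x h).
Proof. by rewrite -(ext_val a0 f (exist _ x h)). Qed.

Definition good (f : J -> B) K (L : seq (I -> B)) :=
  [/\ uniq L, (forall x, x \in L -> S x) & forall j, ~ P K (f j) -> sval j \in L].

Definition sumL (f : J -> B) (L : seq (I -> B)) (i : I) := \sum_(x <- L) ext 0 f x * x i.

Lemma In_map_val (l : seq J) j : List.In j l -> sval j \in [seq sval j | j <- l].
Proof. elim: l => [|a l IH] //= [->|h]; rewrite inE ?eqxx //; by rewrite IH ?orbT. Qed.

Lemma map_val_S (l : seq J) x : x \in [seq sval j | j <- l] -> S x.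
Proof.
elim: l => [|a l IH] //=; rewrite inE => /orP [/eqP ->|h]; [exact: (svalP a)|exact: IH].
Qed.

Lemma good_ex f K : cnull m f -> exists L, good f K L.
Proof.
move=> hf; case: (hf K) => l hl; exists (undup [seq sval j | j <- l]); split.
- exact: undup_uniq.
- by move=> x; rewrite mem_undup; apply: map_val_S.
- by move=> j hj; rewrite mem_undup; apply: In_map_val; apply: hl.
Qed.

Lemma good_mono f K K' L : (K <= K')%N -> good f K' L -> good f K L.
Proof.
move=> hK [h1 h2 h3]; split => // j hj; apply: h3 => h; apply: hj; exact: P_le h.
Qed.

Lemma out_P f K L x : good f K L -> x \notin L -> P K (ext 0 f x).
Proof.
move=> [_ _ h3] hx; case: (pselect (S x)) => hS; last by rewrite ext_nS //; exact: Pzero.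
rewrite (ext_S _ _ hS); apply: NNPP => hn; move: (h3 _ hn) => /=; by rewrite (negbTE hx).
Qed.

Lemma good_diff f K L1 L2 : good f K L1 -> good f K L2 ->
  forall i, P K (sumL f L1 i - sumL f L2 i).
Proof.
move=> g1 g2 i; rewrite /sumL (bigID (mem L2)) [X in _ - X](bigID (mem L1)) /=.
have -> : \sum_(x <- L1 | x \in L2) ext 0 f x * x i = \sum_(x <- L2 | x \in L1) ext 0 f x * x i.
  rewrite -big_filter -[RHS]big_filter; apply: perm_big; apply: uniq_perm.
  - by apply: filter_uniq; case: g1.
  - by apply: filter_uniq; case: g2.
  - by move=> x; rewrite !mem_filter andbC.
rewrite opprD addrACA subrr add0r; apply: PB.
  rewrite big_seq_cond; apply: (big_ind (P K)); [exact: Pzero|exact: PD|].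
  move=> x /andP [_ hx]; apply: PMr; exact: (out_P g2).
rewrite big_seq_cond; apply: (big_ind (P K)); [exact: Pzero|exact: PD|].
move=> x /andP [_ hx]; apply: PMr; exact: (out_P g1).
Qed.

Definition Rep (f : J -> B) (w : I -> B) :=
  forall K L, good f K L -> forall i, P K (w i - sumL f L i).

Lemma Rep_ex f : cnull m f -> exists w, Rep f w.
Proof.
move=> hf; have : forall n, exists L, good f n L by move=> n; apply: good_ex.
case/my_choice => Ls hLs.
have hc : cauchy (fun n i => sumL f (Ls n) i).
  move=> K; exists K => n p hn hp i; apply: good_diff; exact: good_mono (hLs _).
case: (cv_exists hc) => w hw; exists w => K L hL i.
case: (hw K) => N HN; pose n := maxn N K.
have -> : w i - sumL f L i = (w i - sumL f (Ls n) i) + (sumL f (Ls n) i - sumL f L i) by ring.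
apply: PD; first by apply: HN; exact: leq_maxl.
apply: good_diff => //; apply: good_mono (hLs n); exact: leq_maxr.
Qed.

Lemma Rep_uniq f w w' : cnull m f -> Rep f w -> Rep f w' -> w = w'.
Proof.
move=> hf h h'; apply: allP_eq => K i; case: (good_ex K hf) => L hL.
have -> : w i - w' i = (w i - sumL f L i) - (w' i - sumL f L i) by ring.
by apply: PB; [apply: h|apply: h'].
Qed.

Lemma Rep_of f w : (forall K, exists L, good f K L /\ forall i, P K (w i - sumL f L i)) -> Rep f w.
Proof.
move=> h K L hL i; case: (h K) => L' [hL' h2].
have -> : w i - sumL f L i = (w i - sumL f L' i) + (sumL f L' i - sumL f L i) by ring.
by apply: PD; [apply: h2|apply: good_diff].
Qed.

Definition phi (f : J -> B) : I -> B := epsilon (inhabits (fun _ => 0)) (Rep f).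

Lemma phi_spec f : cnull m f -> Rep f (phi f).
Proof. by move=> hf; rewrite /phi; apply: epsilon_spec; apply: Rep_ex. Qed.

Lemma phi_eq f w : cnull m f -> Rep f w -> phi f = w.
Proof. by move=> hf hw; apply: (Rep_uniq hf (phi_spec hf) hw). Qed.

Lemma ext_add (f g : J -> B) x : ext 0 (fun j => f j + g j) x = ext 0 f x + ext 0 g x.
Proof. by rewrite /ext; case: pselect => // _; rewrite addr0. Qed.

Lemma ext_mul (b : B) (f : J -> B) x : ext 0 (fun j => b * f j) x = b * ext 0 f x.
Proof. by rewrite /ext; case: pselect => // _; rewrite mulr0. Qed.

Lemma phi_add f g : cnull m f -> cnull m g ->
  phi (fun j => f j + g j) = (fun i => phi f i + phi g i).
Proof.
move=> hf hg; apply: phi_eq; first exact: cnullD.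
apply: Rep_of => K; case: (good_ex K hf) => L1 hL1; case: (good_ex K hg) => L2 hL2.
pose L := undup (L1 ++ L2).
have gL : forall h : J -> B, (forall j, ~ P K (h j) -> sval j \in L1 ++ L2) -> good h K L.
  move=> h hh; split; first exact: undup_uniq.
    move=> x; rewrite mem_undup mem_cat => /orP [hx|hx].
      by case: hL1 => _ hh1 _; apply: hh1.
    by case: hL2 => _ hh1 _; apply: hh1.
  by move=> j hj; rewrite mem_undup; apply: hh.
have gf : good f K L.
  by apply: gL => j hj; rewrite mem_cat; case: hL1 => _ _ ->.
have gg : good g K L.
  by apply: gL => j hj; rewrite mem_cat; case: hL2 => _ _ -> //; rewrite orbT.
exists L; split.
  apply: gL => j hj; rewrite mem_cat; case: (classic (P K (f j))) => h1.
    case: (classic (P K (g j))) => h2; first by exfalso; apply: hj; apply: PD.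
    by case: hL2 => _ _ ->; rewrite ?orbT.
  by case: hL1 => _ _ ->.
move=> i.
have -> : sumL (fun j => f j + g j) L i = sumL f L i + sumL g L i.
  by rewrite /sumL -big_split; apply: eq_bigr => x _; rewrite ext_add mulrDl.
have -> : phi f i + phi g i - (sumL f L i + sumL g L i) =
  (phi f i - sumL f L i) + (phi g i - sumL g L i) by ring.
by apply: PD; [apply: (phi_spec hf)|apply: (phi_spec hg)].
Qed.

Lemma phi_mul (b : B) f : cnull m f -> phi (fun j => b * f j) = (fun i => b * phi f i).
Proof.
move=> hf; apply: phi_eq; first exact: cnullM.
apply: Rep_of => K; case: (good_ex K hf) => L hL; exists L; split.
  case: hL => h1 h2 h3; split => // j hj; apply: h3 => h; apply: hj; exact: PM.
move=> i; have -> : sumL (fun j => b * f j) L i = b * sumL f L i.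
  by rewrite /sumL mulr_sumr; apply: eq_bigr => x _; rewrite ext_mul mulrA.
by rewrite -mulrBr; apply: PM; apply: (phi_spec hf).
Qed.

Lemma phi_fin f L : cnull m f -> uniq L -> (forall x, x \in L -> S x) ->
  (forall j, f j <> 0 -> sval j \in L) -> phi f = sumL f L.
Proof.
move=> hf hu hS hsupp; apply: phi_eq => // K L' hL' i; apply: good_diff => //.
split => // j hj; apply: hsupp => e; apply: hj; rewrite e; exact: Pzero.
Qed.

Lemma phi_M f : cnull m f -> M (phi f).
Proof.
move=> hf; have : forall n, exists L, good f n L by move=> n; apply: good_ex.
case/my_choice => Ls hLs.
pose U := fix U (n : nat) : seq (I -> B) :=
  match n with 0 => [::] | n'.+1 => U n' ++ [seq x <- Ls n' | x \notin U n'] end.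
pose new n := [seq x <- Ls n | x \notin U n].
have US : forall n x, x \in U n -> S x.
  elim=> [|n IH] x //=; rewrite mem_cat => /orP [h|]; first exact: IH.
  by rewrite mem_filter => /andP [_ h]; case: (hLs n) => _ hh _; apply: hh.
have Uu : forall n, uniq (U n).
  elim=> [|n IH] //=; rewrite cat_uniq IH /=; apply/andP; split.
    by apply/hasPn => x; rewrite mem_filter => /andP [].
  by apply: filter_uniq; case: (hLs n).
have Ug : forall n, good f n (U n.+1).
  move=> n; split => //; first by move=> x; apply: US.
  move=> j hj /=; rewrite mem_cat mem_filter; case: (hLs n) => _ _ h.
  by case: (sval j \in U n) => //=; apply: h.
apply: hpc; apply: (@flatten_series I M (fun n => [seq (ext 0 f x, x) | x <- new n]) (fun n => n.-1)).
- exact: M0.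
- move=> n y hy; case: (in_smap hy) => x [<- hx] /=.
  have hx' := In_mem' hx; rewrite mem_filter in hx'; case/andP: hx' => hxU hxL.
  split; last by apply: hSM; case: (hLs n) => _ hh _; apply: hh.
  case: n hxU hxL {hy hx} => [|n] hxU hxL //=; exact: (out_P (Ug n)).
- by move=> K; exists K.+1 => n hn; case: n hn.
- move=> K; exists K.+1 => N hN i.
  have -> : \sum_(n < N) \sum_(x <- [seq (ext 0 f x, x) | x <- new n]) x.1 * x.2 i = sumL f (U N) i.
    elim: (N) => [|n IH]; first by rewrite big_ord0 /sumL big_nil.
    by rewrite big_ord_recr /= IH /sumL big_cat big_map.
  case: N hN => [//|N] hN; apply: (phi_spec hf); exact: good_mono (Ug N).
Qed.

Definition optJ (x : I -> B) : option J :=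
  match pselect (S x) with left h => Some (exist _ x h) | right _ => None end.

Definition toJ (L : seq (I -> B)) : seq J := pmap optJ L.

Lemma optJ_val (j : J) : optJ (sval j) = Some j.
Proof.
case: j => x h /=; rewrite /optJ; case: pselect => [h'|n] //.
by rewrite (Prop_irrelevance h' h).
Qed.

Lemma toJ_In L (j : J) : sval j \in L -> List.In j (toJ L).
Proof.
elim: L => [|a L IH] //; rewrite inE => /orP [/eqP e|h].
  by rewrite /toJ /= -e optJ_val /=; left.
rewrite /toJ /=; case: (optJ a) => [y|]; [right|]; exact: IH.
Qed.

Lemma ext_incl (y : J -> CC) x : ext 0 (incl B y) x = (ext 0 y x)%:A.
Proof. by rewrite /ext /incl; case: pselect => // _; rewrite scale0r. Qed.

Lemma res_sumL (y : J -> CC) L i :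
  res (sumL (incl B y) L i) = \sum_(x <- L) ext 0 y x * res (x i).
Proof.
by rewrite /sumL res_sum; apply: eq_bigr => x _; rewrite res_mul ext_incl res_alg.
Qed.

Lemma lead_inj : leading_injective m phi.
Proof.
move=> y1 y2 [l1 h1] [l2 h2] e.
pose L := undup [seq sval j | j <- l1 ++ l2].
have hu : uniq L by apply: undup_uniq.
have hS : forall x, x \in L -> S x by move=> x; rewrite mem_undup; apply: map_val_S.
have hsupp : forall (y : J -> CC) l, (forall j, y j <> 0 -> List.In j l) ->
    (forall j, List.In j l -> List.In j (l1 ++ l2)) ->
    phi (incl B y) = sumL (incl B y) L.
  move=> y l hy hl; apply: phi_fin => //.
    by apply: cnull_incl; exists l.
  move=> j hj; rewrite mem_undup; apply: In_map_val; apply: hl; apply: hy => e0.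
  by apply: hj; rewrite /incl e0 scale0r.
rewrite (hsupp y1 l1) // in e; last by move=> j hj; apply/In_cat; left.
rewrite (hsupp y2 l2) // in e; last by move=> j hj; apply/In_cat; right.
have hc : forall i, \sum_(x <- L) (ext 0 y1 x - ext 0 y2 x) * res (x i) = 0.
  move=> i; have := congr1 (fun g => g i) e; rewrite /proj /= !res_sumL => h.
  rewrite (eq_bigr (fun x => ext 0 y1 x * res (x i) - ext 0 y2 x * res (x i))); last first.
    by move=> x _; ring.
  by rewrite sumrB h subrr.
have hind := hSind hu hS hc.
apply: functional_extensionality => j; case: (boolP (sval j \in L)) => hj.
  by apply/eqP; rewrite -subr_eq0; apply/eqP; have := hind _ hj; rewrite !ext_val.
have z1 : y1 j = 0.
  apply: NNPP => hn; move: hj; rewrite mem_undup; apply/negP/negPn.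
  by apply: In_map_val; apply/In_cat; left; apply: h1.
have z2 : y2 j = 0.
  apply: NNPP => hn; move: hj; rewrite mem_undup; apply/negP/negPn.
  by apply: In_map_val; apply/In_cat; right; apply: h2.
by rewrite z1 z2.
Qed.

Lemma approx w : M w -> exists y : J -> CC, fin_supp y /\
   Comb (P 1) M (fun i => w i - phi (incl B y) i).
Proof.
move=> hw; case: (hSspan hw) => L [c [hu hS hres]].
pose y (j : J) := if sval j \in L then c (sval j) else 0.
have hy : forall j, y j <> 0 -> sval j \in L.
  by move=> j; rewrite /y; case: (sval j \in L).
have hys : fin_supp y by exists (toJ L) => j hj; apply: toJ_In; apply: hy.
exists y; split => //.
have e : phi (incl B y) = sumL (incl B y) L.
  apply: phi_fin => //; first exact: cnull_incl.
  by move=> j hj; apply: hy => e0; apply: hj; rewrite /incl e0 scale0r.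
apply: red1.
  apply: MB => //; apply: phi_M; exact: cnull_incl.
move=> i; rewrite res_sub e res_sumL hres; apply/eqP; rewrite subr_eq0; apply/eqP.
rewrite big_seq_cond [RHS]big_seq_cond; apply: eq_bigr => x /andP [hx _].
by rewrite (ext_S _ _ (hS x hx)) /y /= hx.
Qed.

Lemma Comb_sum (T A : Type) Q (Z : (T -> B) -> Prop) (l : seq A) (F : A -> T -> B) :
  (forall a, List.In a l -> Comb Q Z (F a)) -> Comb Q Z (fun i => \sum_(a <- l) F a i).
Proof.
elim: l => [|a l IH] H.
  have -> : (fun i : T => \sum_(a <- [::]) F a i) = (fun _ => 0).
    by apply: functional_extensionality => i; rewrite big_nil.
  exact: Comb0.
have -> : (fun i => \sum_(a0 <- a :: l) F a0 i) = (fun i => F a i + \sum_(a0 <- l) F a0 i).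
  by apply: functional_extensionality => i; rewrite big_cons.
apply: CombD; first by apply: H; left.
by apply: IH => b hb; apply: H; right.
Qed.

Definition GoodS (h : I -> B) K (g : J -> B) :=
  cnull m g /\ Comb (P K) M (fun i => h i - phi g i).

Lemma surj_step h K g : GoodS h K g -> exists g', GoodS h K.+1 g' /\
  forall j, P K (g' j - g j).
Proof.
move=> [hg [l [Hl el]]].
have : forall w, exists y : J -> CC, M w -> fin_supp y /\
    Comb (P 1) M (fun i => w i - phi (incl B y) i).
  move=> w; case: (classic (M w)) => hw; last by exists (fun _ => 0).
  by case: (approx hw) => y hy; exists y.
case/my_choice => ys hys.
pose l' := [seq (x.1, incl B (ys x.2)) | x <- l].
have hl'c : forall x, List.In x l' -> cnull m x.2.
  move=> x hx; case: (in_smap hx) => x' [<- hx'] /=; apply: cnull_incl.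
  by case: (Hl x' hx') => _ hM; case: (hys _ hM).
pose dg := fun j => \sum_(x <- l') x.1 * x.2 j.
have hdg : cnull m dg by apply: cnull_sum => x hx; apply: cnullM; apply: hl'c.
exists (fun j => g j + dg j); split; last first.
  move=> j; rewrite addrC addKr; apply: Psum => x hx; apply: PMr.
  by case: (in_smap hx) => x' [<- hx'] /=; case: (Hl x' hx').
split; first exact: cnullD.
rewrite (phi_add hg hdg) /dg (phi_comb phi_add phi_mul hl'c).
have -> : (fun i => h i - (phi g i + \sum_(x <- l') x.1 * phi x.2 i)) =
    (fun i => \sum_(x <- l) x.1 * (x.2 i - phi (incl B (ys x.2)) i)).
  apply: functional_extensionality => i.
  have -> : h i - (phi g i + \sum_(x <- l') x.1 * phi x.2 i) =
    (h i - phi g i) - \sum_(x <- l') x.1 * phi x.2 i by ring.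
  have -> : h i - phi g i = \sum_(x <- l) x.1 * x.2 i by have := congr1 (fun F => F i) el.
  rewrite /l' big_map -sumrB; apply: eq_bigr => x _ /=; ring.
apply: Comb_sum => x hx; case: (Hl x hx) => hP hM; case: (hys _ hM) => _ hc.
apply: (CombM _ hc) => y hy; have := P_mul hP hy; by rewrite addn1.
Qed.

Lemma phi_surj h : M h -> exists f, cnull m f /\ phi f = h.
Proof.
move=> hh.
have : forall p : nat * (J -> B), exists g', GoodS h p.1 p.2 ->
    GoodS h p.1.+1 g' /\ forall j, P p.1 (g' j - p.2 j).
  move=> [K g]; case: (classic (GoodS h K g)) => hG; last by exists g.
  by case: (surj_step hG) => g' hg'; exists g'.
case/my_choice => st hst.
pose gs := fix gs (n : nat) : J -> B := match n with 0 => fun _ => 0 | n'.+1 => st (n', gs n') end.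
have hgs : forall n, GoodS h n (gs n) /\ forall j, P n (gs n.+1 j - gs n j).
  elim=> [|n [IH1 IH2]].
    have G0 : GoodS h 0 (gs 0).
      split; first exact: cnull0.
      rewrite /= (phi0 phi_mul); exists [:: (1, h)]; split.
        by move=> x [<-|[]].
      by apply: functional_extensionality => i; rewrite big_seq1 mul1r subr0.
    by split => //; case: (hst (0%N, gs 0) G0).
  have G1 : GoodS h n.+1 (gs n.+1) by case: (hst (n, gs n) IH1).
  by split => //; case: (hst (n.+1, gs n.+1) G1).
have htel : forall K d j, P K (gs (K + d)%N j - gs K j).
  move=> K d j; elim: d => [|d IH]; first by rewrite addn0 subrr; exact: Pzero.
  have -> : gs (K + d.+1)%N j - gs K j = (gs (K + d)%N.+1 j - gs (K + d)%N j) + (gs (K + d)%N j - gs K j).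
    by rewrite addnS; ring.
  apply: PD => //; apply: (P_le (leq_addr d K)); by case: (hgs (K + d)%N).
have hca : cauchy (fun n => gs n).
  move=> K; exists K => n p hn hp j.
  have -> : gs n j - gs p j = (gs (K + (n - K))%N j - gs K j) - (gs (K + (p - K))%N j - gs K j).
    by rewrite !subnKC //; ring.
  by apply: PB; apply: htel.
case: (cv_exists hca) => G hG.
have hGc : cnull m G by apply: (cv_cnull _ hG) => n; case: (hgs n) => [[]].
exists G; split => //; apply: allP_eq => K i.
case: (hG K) => N HN; pose n := maxn N K.
have hgn : cnull m (gs n) by case: (hgs n) => [[]].
have -> : phi G i - h i = phi (fun j => G j - gs n j) i - (h i - phi (gs n) i).
  by rewrite (phiB phi_add phi_mul hGc hgn); ring.
apply: PB.
  apply: (phi_cont phi_add phi_mul); first exact: cnullB.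
  by move=> j; apply: HN; exact: leq_maxl.
case: (hgs n) => [[_ hc] _]; apply: (P_le (leq_maxr N K)); exact: Comb_P hc i.
Qed.

Lemma phi_inj f g : cnull m f -> cnull m g -> phi f = phi g -> f = g.
Proof.
move=> hf hg e.
pose d := fun j => f j - g j.
have hd : cnull m d by apply: cnullB.
have hpd : phi d = fun _ => 0.
  rewrite /d (phiB phi_add phi_mul hf hg) e; apply: functional_extensionality => i.
  by rewrite subrr.
suff hK : forall K j, P K (d j).
  apply: allP_eq => K j; exact: hK.
elim=> [|K IH] j //.
case: (decomp hd IH) => l [Hl el].
have : forall h : J -> B, exists lh : seq J, cnull m h -> forall j, ~ P 1 (h j) -> List.In j lh.
  move=> h; case: (classic (cnull m h)) => hh; last by exists [::].
  by case: (hh 1%N) => lh H; exists lh.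
case/my_choice => lst hlst.
pose L := undup (flatten [seq [seq sval j | j <- lst x.2] | x <- l]).
have hu : uniq L by apply: undup_uniq.
have hS : forall x, x \in L -> S x.
  move=> x; rewrite mem_undup => /flatten_mapP [y _]; exact: map_val_S.
have hLc : forall x j', List.In x l -> res (x.2 j') <> 0 -> sval j' \in L.
  move=> x j' hx hr; rewrite mem_undup; apply/flatten_mapP; exists x; first exact: In_mem'.
  apply: In_map_val; apply: hlst; first by case: (Hl x hx).
  by move=> h1; apply: hr; apply/res_m/P1m.
pose c (h : J -> B) := fun j => res (h j).
pose beta x := \sum_(y <- l) y.1 * (ext 0 (c y.2) x)%:A.
have key : forall i, P K.+1 (\sum_(x <- L) beta x * (res (x i))%:A).
  move=> i.
  have e1 : phi d i = \sum_(y <- l) y.1 * phi y.2 i.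
    rewrite el (phi_comb phi_add phi_mul) //; by move=> y hy; case: (Hl y hy).
  have e2 : \sum_(x <- L) beta x * (res (x i))%:A =
      \sum_(y <- l) y.1 * \sum_(x <- L) (ext 0 (c y.2) x)%:A * (res (x i))%:A.
    rewrite (eq_bigr (fun x => \sum_(y <- l) y.1 * ((ext 0 (c y.2) x)%:A * (res (x i))%:A))); last first.
      by move=> x _; rewrite /beta mulr_suml; apply: eq_bigr => y _; ring.
    by rewrite exchange_big; apply: eq_bigr => y _; rewrite mulr_sumr.
  have -> : \sum_(x <- L) beta x * (res (x i))%:A =
      phi d i - \sum_(y <- l) y.1 * (phi y.2 i - \sum_(x <- L) (ext 0 (c y.2) x)%:A * (res (x i))%:A).
    by rewrite e2 e1 -sumrB; apply: eq_bigr => y _; ring.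
  rewrite hpd sub0r; apply: PN; apply: Psum => y hy; case: (Hl y hy) => hy1 hy2.
  have := @P_mul K 1 y.1 (phi y.2 i - \sum_(x <- L) (ext 0 (c y.2) x)%:A * (res (x i))%:A) hy1.
  rewrite addn1; apply; apply/P1m.
  have hinc : cnull m (incl B (c y.2)).
    apply: cnull_incl; exists (lst y.2) => j' hj'; apply: hlst => // h1; apply: hj'.
    by rewrite /c; apply/res_m/P1m.
  have ep : phi (incl B (c y.2)) = sumL (incl B (c y.2)) L.
    apply: phi_fin => // j' hj'; apply: (hLc y) => // h0; apply: hj'.
    by rewrite /incl /c h0 scale0r.
  have hsub : cnull m (fun j' => y.2 j' - incl B (c y.2) j') by apply: cnullB.
  have e3 : phi y.2 i = phi (fun j' => y.2 j' - incl B (c y.2) j') i + phi (incl B (c y.2)) i.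
    by rewrite (phiB phi_add phi_mul hy2 hinc); ring.
  rewrite e3 ep /sumL -addrA; apply: mD.
    apply/P1m; apply: (phi_cont phi_add phi_mul hsub) => j'; apply/P1m.
    exact: res_spec.
  rewrite -sumrB; apply: (big_ind m); [exact: m0|exact: mD|] => x _.
  rewrite ext_incl -mulrBr; apply: mM; exact: res_spec.
have hbeta : forall x, x \in L -> P K.+1 (beta x).
  apply: (@elim_lemma _ I (P K.+1) (Pzero _) (@PD _) _ L (fun x i => res (x i)) hu) => //.
    by move=> c0 a ha; apply: PM.
  by move=> c0 hc0 x hx; apply: (hSind hu hS hc0).
have -> : d j = \sum_(y <- l) y.1 * (y.2 j - (c y.2 j)%:A) + \sum_(y <- l) y.1 * (c y.2 j)%:A.
  rewrite el -big_split /=; apply: eq_bigr => y _; ring.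
apply: PD.
  apply: Psum => y hy; case: (Hl y hy) => hy1 _.
  have := P_mul hy1 (proj2 (P1m _) (res_spec (y.2 j))); by rewrite addn1.
case: (boolP (sval j \in L)) => hj.
  have := hbeta _ hj; rewrite /beta; congr (P _); apply: eq_bigr => y _; by rewrite ext_val.
rewrite big_seq big1; first exact: Pzero.
move=> y hy; have : c y.2 j = 0.
  apply: NNPP => hn; move/negP: hj; apply; apply: (hLc y) => //; exact: In_mem hy.
by move=> ->; rewrite scale0r mulr0.
Qed.

End IimpII.

End Base.

Theorem proposition2p36 (B : comAlgType CC) (m : B -> Prop) (I : Type)
    (M : (I -> B) -> Prop) :
  deformation_base m ->
  is_Bsubmodule m M ->
  ((quasi_flat m M /\ pseudoclosed m M) <->
   exists (J : Type) (phi : (J -> B) -> (I -> B)),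
     Blin_iso m phi M /\ leading_injective m phi).
Proof.
move=> hdb hMsub; split.
- move=> [hqf hpc].
  have hM0 : M (fun _ => 0) by case: hMsub.
  case: (basis_exists m hM0) => S [hSM hSind hSspan].
  exists (J S), (@phi B m I S); split; last exact: (lead_inj hdb hSind).
  split.
  + move=> f hf; exact: (phi_M hdb hMsub hpc hSM hf).
  + move=> f g hf hg; exact: (phi_add hdb hf hg).
  + move=> b f hf; exact: (phi_mul hdb b hf).
  + move=> f g hf hg; exact: (phi_inj hdb hSind hf hg).
  + move=> h hh; exact: (phi_surj hdb hMsub hqf hpc hSM hSspan hh).
- move=> [J [phi [hiso hlead]]]; split.
  + move=> w; exact: (ii_quasi_flat hdb hMsub hiso hlead).
  + exact: (ii_pseudoclosed hdb hiso).
Qed.
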